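(* Let $\Gamma$ be an initial limit Datalog problem. If $\Gamma$ is $\mathcal A$-satisfiable (in standard semantics), then there is an entwined family $\{\mathcal B_n\}_{n\in\omega}$ with $\mathcal B_{l+1}\models\Gamma$.
   Context: Standing assumptions. $\Sigma_{\mathrm{bg}}$ is a first-order signature with a distinguished sort $W$ and a binary relation symbol $\le$ on $W$. All other sorts are written $S$ and are interpreted by a fixed structure $\mathcal A$ as finite sets. $\le$ is interpreted as a total order. $\Sigma_{\mathrm{fg}}$ is a finite set of higher-order predicate symbols of initial type, disjoint from $\Sigma_{\mathrm{bg}}$. $l:=\max\{\mathrm{order}(\rho)\mid X:\rho\in\Sigma_{\mathrm{fg}}\}$. For $i\ge1$, $\Sigma_i\subseteq\Sigma_{\mathrm{fg}}$ consists of the symbols whose type has order at most $i$. Types. Relational types are $\rho::=o\mid\sigma\to\rho$ and argument types are $\sigma::=S\mid W\mid\rho$. The order is given by $\mathrm{order}(S)=\mathrm{order}(W)=\mathrm{order}(o)=0$ and $\mathrm{order}(\sigma\to\tau)=\max(\mathrm{order}(\sigma)+1,\mathrm{order}(\tau))$. Initial types. A type $\sigma_1\to\cdots\to\sigma_n\to o$ is initial if: (O1) at most one $\sigma_j$ is $W$; (O2) if $\sigma_j=W$, then $\mathrm{order}(\sigma_i)<\mathrm{order}(\sigma_j\to\cdots\to\sigma_n\to o)$ for all $i<j$; (O3) each $\sigma_j$ is $S$, $W$ or initial. It is active if some $\sigma_i=W$, and inactive otherwise. Active types are written $\xi$ and inactive ones $\nu$. Problems. A limit Datalog problem $\Gamma$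 is a finite set of higher-order constrained Horn clauses (goal and definite clauses, with $\Sigma_{\mathrm{bg}}$-constraints) over $\Sigma_{\mathrm{bg}}\cup\Sigma_{\mathrm{fg}}$. It includes, for each predicate with a $W$-argument, the limit clause forcing upward closure in that argument with respect to $\le$. It is initial if all symbols of $\Sigma_{\mathrm{fg}}$ have initial type. $\Gamma$ is $\mathcal A$-satisfiable if some $(\Sigma_{\mathrm{fg}},\mathcal S)$-structure (in standard semantics) satisfies every clause of $\Gamma$ under all valuations. Frames and structures. A frame $\mathcal H$ assigns to each type a set: $\mathcal H[S]=\mathcal A[S]$, $\mathcal H[W]=\mathcal A[W]$, $\mathcal H[o]=\mathbb B=\{0,1\}$, and $\mathcal H[\sigma_1\to\sigma_2]\subseteq[\mathcal H[\sigma_1]\to\mathcal H[\sigma_2]]$, where $[A\to B]$ is the set of all functions. $\mathcal S$ is the standard frame, using full function spaces. For $\Xi\subseteq\Sigma_{\mathrm{fg}}$, a $(\Xi,\mathcal H)$-structure $\mathcal B$ extends $\mathcal A$ by an element $X^{\mathcal B}\in\mathcal H[\rho]$ for each $X:\rho\in\Xi$. A $(\Xi_2,\mathcal H_2)$-structure $\mathcal B_2$ is an expansion of a $(\Xi_1,\mathcal H_1)$-structure $\mathcal B_1$ (with $\Xi_1\subseteq\Xi_2$) if $c^{\mathcal B_2}=c^{\mathcal B_1}$ for all $c\in\Xi_1$. $\mathcal B\models\Gamma$ means every clause of $\Gamma$ evaluates to $1$ in $\mathcal B$ under every valuation in the frame of $\mathcal B$. Ordering on relations. $\le_o$ on $[U_n\to\cdots\to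 U_1\to\mathbb B]$ is defined by: $f\le_o g$ iff ($f=0$ or $g=1$) when $n=0$, and iff $f(x)\le_o g(x)$ for all $x$ otherwise. $\top$ is the constantly-$1$ relation. Entwined frame. For $n\ge1$ and a $(\Xi,\mathcal H)$-structure $\mathcal B$, $\mathbb H[\mathcal B]_n$ is defined by cases on $\sigma$: (i) If $\sigma$ is initial with $\mathrm{order}(\sigma)\le n-2$, or $\sigma$ is inactive, $S$, $W$ or $o$ with $\mathrm{order}(\sigma)\le n-1$: $\mathbb H[\mathcal B]_n[\sigma]:=\mathcal H[\sigma]$. (ii) If $\sigma$ is active with $\mathrm{order}(\sigma)=n-1$: $\mathbb H[\mathcal B]_n[W\to\nu]:=\{\top\}\cup\{X^{\mathcal B}\,\overline s\mid X:\overline\tau\to W\to\nu\in\Xi,\ s_i\in\mathcal H[\tau_i]\}$, and $\mathbb H[\mathcal B]_n[\sigma_1\to\xi]:=[\mathbb H[\mathcal B]_n[\sigma_1]\to\mathbb H[\mathcal B]_n[\xi]]$. (iii) If $\sigma$ is initial with $\mathrm{order}(\sigma)=n$: $\mathbb H[\mathcal B]_n[W\to\nu]:=\{f\in[\mathcal A[W]\to\mathbb H[\mathcal B]_n[\nu]]\mid\forall z\le^{\mathcal A}z'.\ f(z)\le_o f(z')\}$, and $\mathbb H[\mathcal B]_n[\sigma_1\to\sigma_2]:=[\mathbb H[\mathcal B]_n[\sigma_1]\to\mathbb H[\mathcal B]_n[\sigma_2]]$ for $\sigma_1\ne W$. (iv) Otherwise: full function space. Entwined family. $\{\mathcal B_n\}_{n\in\omega}$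 is entwined if $\mathcal B_0$ is the unique $(\emptyset,\mathcal S)$-structure and each $\mathcal B_{n+1}$ is a $(\Sigma_{n+1},\mathbb H[\mathcal B_n]_{n+1})$-expansion of $\mathcal B_n$. *)

(* Defs.v *)
From mathcomp Require Import all_boot.
From Stdlib Require List.
Set Implicit Arguments. Unset Strict Implicit. Unset Printing Implicit Defensive.

Fixpoint hprod (I : Type) (F : I -> Type) (l : list I) : Type :=
  match l with nil => unit | i :: l' => (F i * hprod F l')%type end.

Section Types.
Variable Srt : Type.   (* names of the background sorts S other than W *)

Inductive bsrt := BS (s : Srt) | BW.

(* relational types  rho ::= o | sigma -> rho
   argument types    sigma ::= S | W | rho      (S, W packed in AB) *)
Inductive rty := RO | RArr (a : aty) (r : rty)
with aty := AB (b : bsrt) | AR (r : rty).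

Fixpoint ord_r (r : rty) : nat :=
  match r with RO => 0 | RArr a r' => maxn (ord_a a).+1 (ord_r r') end
with ord_a (a : aty) : nat :=
  match a with AB _ => 0 | AR r => ord_r r end.

Fixpoint args (r : rty) : list aty :=
  match r with RO => nil | RArr a r' => a :: args r' end.

Fixpoint mkr (l : list aty) : rty :=
  match l with nil => RO | a :: l' => RArr a (mkr l') end.

Definition isW (a : aty) : bool := match a with AB BW => true | _ => false end.

Definition O1 (r : rty) : Prop := count isW (args r) <= 1.

(* (O2) if sigma_j = W then order(sigma_i) < order(sigma_j -> ... -> sigma_n -> o)
        for all i < j  (indices counted from 0 here) *)
Definition O2 (r : rty) : Prop :=
  forall i j, i < j -> j < size (args r) ->
    isW (nth (AR RO) (args r) j) ->
    ord_a (nth (AR RO) (args r) i) < ord_r (mkr (drop j (args r))).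

Inductive initial_r : rty -> Prop :=
  | Initial r : O1 r -> O2 r -> (forall a, List.In a (args r) -> initial_a a) ->
                initial_r r
with initial_a : aty -> Prop :=
  | InitialB b : initial_a (AB b)
  | InitialR r : initial_r r -> initial_a (AR r).

Definition active (r : rty) : Prop := initial_r r /\ has isW (args r).
Definition inactive (r : rty) : Prop := initial_r r /\ ~~ has isW (args r).
End Types.

Arguments RO {Srt}.
Arguments BW {Srt}.

Record bgsig := BgSig {
  Srt : Type;                          (* sorts other than W *)
  Fsym : Type;
  fdom : Fsym -> list (bsrt Srt);
  fcod : Fsym -> bsrt Srt;
  Rsym : Type;                         (* relation symbols other than <= *)
  rdom : Rsym -> list (bsrt Srt)
}.

Definition bcar_of (S : Type) (SC : S -> Type) (WC : Type) (b : bsrt S) : Type :=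
  match b with BS s => SC s | BW => WC end.

Record bgstr (Sg : bgsig) := BgStr {
  SC : Srt Sg -> finType;
  WC : Type;
  leW : WC -> WC -> Prop;
  fint : forall f : Fsym Sg,
     hprod (bcar_of (fun s => SC s : Type) WC) (fdom f) ->
     bcar_of (fun s => SC s : Type) WC (fcod f);
  rint : forall p : Rsym Sg,
     hprod (bcar_of (fun s => SC s : Type) WC) (rdom p) -> Prop
}.

Definition total_order (T : Type) (le : T -> T -> Prop) : Prop :=
  (forall x, le x x) /\ (forall x y, le x y -> le y x -> x = y) /\
  (forall x y z, le x y -> le y z -> le x z) /\ (forall x y, le x y \/ le y x).

Section Syntax.
Variables (Sg : bgsig) (Sym : Type) (fty : Sym -> rty (Srt Sg)).

Notation aty := (aty (Srt Sg)).
Notation rty := (rty (Srt Sg)).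
Notation bsrt := (bsrt (Srt Sg)).

Inductive var : list aty -> aty -> Type :=
  | VZ (G : list aty) (a : aty) : var (a :: G) a
  | VS (G : list aty) (a b : aty) : var G a -> var (b :: G) a.

Fixpoint vidx (G : list aty) (a : aty) (v : var G a) : nat :=
  match v with VZ _ _ => 0 | VS _ _ _ v' => (vidx v').+1 end.

(* (lambda-free) terms over Sigma_bg u Sigma_fg *)
Inductive tm (G : list aty) : aty -> Type :=
  | Tvar (a : aty) : var G a -> tm G a
  | Tfg (X : Sym) : tm G (AR (fty X))
  | Tapp (a : aty) (r : rty) : tm G (AR (RArr a r)) -> tm G a -> tm G (AR r)
  | Tfun (f : Fsym Sg) : tms G (fdom f) -> tm G (AB (fcod f))
with tms (G : list aty) : list bsrt -> Type :=
  | Tnil : tms G nil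
  | Tcons (b : bsrt) (l : list bsrt) : tm G (AB b) -> tms G l -> tms G (b :: l).

Inductive form : list aty -> Type :=
  | Ftrue (G : list aty) : form G
  | Ffalse (G : list aty) : form G
  | Fle (G : list aty) : tm G (AB BW) -> tm G (AB BW) -> form G
  | Feq (G : list aty) (b : bsrt) : tm G (AB b) -> tm G (AB b) -> form G
  | Frel (G : list aty) (p : Rsym Sg) : tms G (rdom p) -> form G
  | Fnot (G : list aty) : form G -> form G
  | Fand (G : list aty) : form G -> form G -> form G
  | For (G : list aty) : form G -> form G -> form G
  | Fimp (G : list aty) : form G -> form G -> form G
  | Fex (G : list aty) (b : bsrt) : form (AB b :: G) -> form G
  | Fall (G : list aty) (b : bsrt) : form (AB b :: G) -> form G.

(* A clause  phi /\ A_1 /\ ... /\ A_m -> H  (H an atom X x1..xk, or absent: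
   goal clause).  The variables of the clause are given by the context cctx. *)
Record clause := Clause {
  cctx : list aty;
  ccon : form cctx;
  cbody : list (tm cctx (AR RO));
  chead : option (tm cctx (AR RO))
}.

(* t is X applied to the variables with indices l (in order) *)
Inductive appvars (G : list aty) : forall r : rty, tm G (AR r) -> Sym -> list nat -> Prop :=
  | AVfg (X : Sym) : appvars (Tfg G X) X nil
  | AVapp (a : aty) (r : rty) (t : tm G (AR (RArr a r))) (v : var G a) X l :
      appvars t X l -> appvars (Tapp t (Tvar v)) X (rcons l (vidx v)).

Definition clause_wf (C : clause) : Prop :=
  match chead C with
  | None => True
  | Some t => exists X l, appvars t X l /\ uniq l
  end.

Definition hasW (X : Sym) : bool := has (@isW _) (args (fty X)).

(* The limit clause for X (whose j-th argument has sort W):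
     X x1 .. z .. xk  /\  z <= z'  ->  X x1 .. z' .. xk
   with x1,..,xk,z,z' pairwise distinct and no further variables. *)
Definition is_limit_clause (X : Sym) (C : clause) : Prop :=
  exists (j : nat) (l1 l2 : list nat) (z z' : var (cctx C) (AB BW))
         (t1 t2 : tm (cctx C) (AR RO)),
    List.nth j (args (fty X)) (AR RO) = AB BW /\
    size (cctx C) = (size (args (fty X))).+1 /\
    ccon C = Fle (Tvar z) (Tvar z') /\
    cbody C = t1 :: nil /\
    chead C = Some t2 /\
    appvars t1 X l1 /\ appvars t2 X l2 /\
    uniq l1 /\ uniq l2 /\
    nth 0 l1 j = vidx z /\ nth 0 l2 j = vidx z' /\ vidx z <> vidx z' /\
    (forall i, i <> j -> nth 0 l1 i = nth 0 l2 i).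

Definition limit_problem (P : list clause) : Prop :=
  (forall C, List.In C P -> clause_wf C) /\
  (forall X, hasW X -> exists C, List.In C P /\ is_limit_clause X C).

Definition initial_sig : Prop := forall X, initial_r (fty X).
End Syntax.

Section Semantics.
Variables (Sg : bgsig) (A : bgstr Sg) (Sym : finType) (fty : Sym -> rty (Srt Sg)).

Notation aty := (aty (Srt Sg)).
Notation rty := (rty (Srt Sg)).
Notation bsrt := (bsrt (Srt Sg)).

Definition Db (b : bsrt) : Type := bcar_of (fun s => SC A s : Type) (WC A) b.

(* standard (full) domains;  elements of a frame are taken from these *)
Fixpoint Dr (r : rty) : Type :=
  match r with RO => bool | RArr a r' => Da a -> Dr r' end
with Da (a : aty) : Type :=
  match a with AB b => Db b | AR r => Dr r end.

(* A frame H is represented by a subset H[rho] of the full domain at each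
   relational type; at S and W it is A[S], A[W] and at o it is B. *)
Definition frame := forall r : rty, Dr r -> Prop.

Definition Ha (H : frame) (a : aty) : Da a -> Prop :=
  match a return Da a -> Prop with AB _ => fun _ => True | AR r => @H r end.

Definition is_frame (H : frame) : Prop :=
  (forall b, @H RO b) /\
  (forall a r (f : Dr (RArr a r)), @H _ f -> forall x, Ha H x -> @H r (f x)).

Definition std : frame := fun _ _ => True.

Fixpoint top (r : rty) : Dr r :=
  match r return Dr r with RO => true | RArr a r' => fun _ => top r' end.

(* interpretations of the foreground symbols; a (Xi,H)-structure is such an
   assignment whose values on the symbols of Xi lie in H (values of symbols
   outside Xi are irrelevant and never used) *)
Definition fgstr := forall X : Sym, Dr (fty X).

Definition is_str (Xi : Sym -> Prop) (H : frame) (B : fgstr) : Prop :=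
  forall X, Xi X -> H (fty X) (B X).

Inductive appchain (H : frame) (r0 : rty) (f0 : Dr r0) : forall r : rty, Dr r -> Prop :=
  | ACrefl : appchain H f0 f0
  | ACstep (a : aty) (r : rty) (g : Dr (RArr a r)) (x : Da a) :
      appchain H f0 g -> Ha H x -> appchain H f0 (g x).

Section Entwined.
Variables (n : nat) (Xi : Sym -> Prop) (H : frame) (B : fgstr).

Definition case_i (s : rty) : Prop :=
  (initial_r s /\ (ord_r s).+2 <= n) \/ (inactive s /\ (ord_r s).+1 <= n).
Definition case_ii (s : rty) : Prop := active s /\ (ord_r s).+1 = n.
Definition case_iii (s : rty) : Prop := initial_r s /\ ord_r s = n.

(* For each relational type: the set HH[B]_n[rho], together with the order
   <=_o on [HH[sigma_1] -> ... -> HH[sigma_k] -> B]. *)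
Fixpoint EHp (r : rty) : (Dr r -> Prop) * (Dr r -> Dr r -> Prop) :=
  match r return (Dr r -> Prop) * (Dr r -> Dr r -> Prop) with
  | RO =>
      (fun b : bool => case_i RO -> @H RO b,
       fun b c : bool => (b ==> c) : Prop)
  | RArr a r' =>
      let full : Dr (RArr a r') -> Prop :=
        fun f => forall x, @EHa a x -> (EHp r').1 (f x) in
      let fii : Dr (RArr a r') -> Prop :=
        match a as a0 return Dr (RArr a0 r') -> Prop with
        | AB BW => fun f =>
            f = top (RArr (AB BW) r') \/
            exists X, Xi X /\ appchain H (B X) f
        | AB (BS s) => fun f => forall x, (EHp r').1 (f x)
        | AR r0 => fun f => forall x, (EHp r0).1 x -> (EHp r').1 (f x)
        end in
      let fiii : Dr (RArr a r') -> Prop :=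
        match a as a0 return Dr (RArr a0 r') -> Prop with
        | AB BW => fun f =>
            (forall z, (EHp r').1 (f z)) /\
            (forall z z', @leW _ A z z' -> (EHp r').2 (f z) (f z'))
        | AB (BS s) => fun f => forall x, (EHp r').1 (f x)
        | AR r0 => fun f => forall x, (EHp r0).1 x -> (EHp r').1 (f x)
        end in
      let s := RArr a r' in
      (fun f =>
         [/\ case_i s -> @H s f,
             case_ii s -> fii f,
             case_iii s -> fiii f &
             ~ (case_i s \/ case_ii s \/ case_iii s) -> full f],
       fun f g => forall x, @EHa a x -> (EHp r').2 (f x) (g x))
  end
with EHa (a : aty) : Da a -> Prop :=
  match a return Da a -> Prop with
  | AB _ => fun _ => True
  | AR r => (EHp r).1
  end.

Definition EH : frame := fun r => (EHp r).1.
End Entwined.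

(* Sigma_i (i >= 1): symbols of order at most i;  Sigma_0 := empty *)
Definition SigN (i : nat) (X : Sym) : Prop := 0 < i /\ ord_r (fty X) <= i.

(* the frame of B_n:  S for n = 0,  HH[B_{n-1}]_n  otherwise *)
Fixpoint Fr (Bf : nat -> fgstr) (i : nat) : frame :=
  match i with
  | 0 => std
  | i'.+1 => EH i'.+1 (SigN i') (Fr Bf i') (Bf i')
  end.

Definition entwined (Bf : nat -> fgstr) : Prop :=
  forall i, is_str (SigN i.+1) (Fr Bf i.+1) (Bf i.+1) /\
            (forall X, SigN i X -> Bf i.+1 X = Bf i X).

Definition lmax : nat := \max_(X : Sym) ord_r (fty X).

Definition env (G : list aty) := forall a, var G a -> Da a.

Definition econs (G : list aty) (a : aty) (x : Da a) (e : env G) : env (a :: G) :=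
  fun b v =>
    match v in var G' b' return
      (match G' with nil => unit | c :: G'' => Da c -> env G'' -> Da b' end) with
    | VZ _ _ => fun x _ => x
    | VS _ _ _ v' => fun _ e' => e' _ v'
    end x e.

Section Eval.
Variable B : fgstr.

Fixpoint eval (G : list aty) (e : env G) (a : aty) (t : tm fty G a) {struct t} : Da a :=
  match t in tm _ _ a0 return Da a0 with
  | Tvar _ v => e _ v
  | Tfg X => B X
  | Tapp _ _ t1 t2 => (eval e t1) (eval e t2)
  | Tfun f ts => @fint _ A f (evals e ts)
  end
with evals (G : list aty) (e : env G) (l : list bsrt) (ts : tms fty G l) {struct ts}
  : hprod (bcar_of (fun s => SC A s : Type) (WC A)) l :=
  match ts in tms _ _ l0 return hprod (bcar_of (fun s => SC A s : Type) (WC A)) l0 with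
  | Tnil => tt
  | Tcons _ _ t ts' => (eval e t, evals e ts')
  end.

Fixpoint fsem (G : list aty) (phi : form fty G) : env G -> Prop :=
  match phi in form _ G0 return env G0 -> Prop with
  | Ftrue _ => fun _ => True
  | Ffalse _ => fun _ => False
  | Fle _ t1 t2 => fun e => @leW _ A (eval e t1) (eval e t2)
  | Feq _ _ t1 t2 => fun e => eval e t1 = eval e t2
  | Frel _ p ts => fun e => @rint _ A p (evals e ts)
  | Fnot _ p => fun e => ~ fsem p e
  | Fand _ p q => fun e => fsem p e /\ fsem q e
  | For _ p q => fun e => fsem p e \/ fsem q e
  | Fimp _ p q => fun e => fsem p e -> fsem q e
  | Fex _ b p => fun e => exists x : Db b, fsem p (@econs _ (AB b) x e)
  | Fall _ b p => fun e => forall x : Db b, fsem p (@econs _ (AB b) x e)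
  end.
End Eval.

Definition clause_sat (H : frame) (B : fgstr) (C : clause fty) : Prop :=
  forall e : env (cctx C), (forall a (v : var _ a), Ha H (e a v)) ->
    fsem B (ccon C) e ->
    (forall t, List.In t (cbody C) -> eval B e t = true) ->
    match chead C with
    | None => False
    | Some t => eval B e t = true
    end.

Definition models (H : frame) (B : fgstr) (P : list (clause fty)) : Prop :=
  forall C, List.In C P -> clause_sat H B C.

Definition A_satisfiable (P : list (clause fty)) : Prop :=
  exists B : fgstr, models std B P.
End Semantics.

(* Main.v *)
Require Import Defs.
From mathcomp Require Import all_boot.
From Stdlib Require Import Eqdep ClassicalEpsilon Lia.
From mathcomp Require Import zify.
Set Implicit Arguments. Unset Strict Implicit. Unset Printing Implicit Defensive.

Section TypeFacts.
Variable T : Type.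
Notation rty := (rty T).
Notation aty := (aty T).

Lemma mkr_args (r : rty) : mkr (args r) = r.
Proof. by elim: r => //= a r ->. Qed.

Lemma ord_drop (r : rty) j : ord_r (mkr (drop j (args r))) <= ord_r r.
Proof.
elim: r j => [|a r IH] [|j] //=; first by rewrite mkr_args.
by apply: leq_trans (IH j) _; rewrite leq_max leqnn orbT.
Qed.

Lemma initial_inv (a : aty) (r : rty) :
  initial_r (RArr a r) -> initial_a a /\ initial_r r.
Proof.
move=> H; inversion H as [r0 H1 H2 H3 E]; subst.
split; first by apply: H3; left.
constructor.
- move: H1; rewrite /O1 /=; case: (isW a) => //=; lia.
- move=> i j lij ljs hW; exact: (H2 i.+1 j.+1).
- by move=> b Hb; apply: H3; right.
Qed.

Lemma initialR_inv (r : rty) : initial_a (AR r) -> initial_r r.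
Proof. by move=> H; inversion H. Qed.

Lemma has_nth_W (s : seq aty) : has (@isW T) s -> exists2 j, j < size s & isW (nth (AR RO) s j).
Proof.
elim: s => //= a s IH; case Ha: (isW a) => /=.
  by move=> _; exists 0.
by move/IH => [j lj hj]; exists j.+1.
Qed.

Lemma active_inv (a : aty) (r : rty) : active (RArr a r) -> ~~ isW a ->
  [/\ active r, ord_r (RArr a r) = ord_r r & ord_a a < ord_r r].
Proof.
move=> [Hi Hh] Hw; have [Ha Hr] := initial_inv Hi.
have Hh' : has (@isW T) (args r) by move: Hh => /=; rewrite (negbTE Hw).
have [j lj hj] := has_nth_W Hh'.
inversion Hi as [r0 H1 H2 H3 E]; subst.
have := H2 0 j.+1 (ltn0Sn j) lj hj => /= lt.
have lt2 : ord_a a < ord_r r by apply: leq_trans lt (ord_drop r j).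
split => //=. apply/maxn_idPr. exact: lt2.
Qed.

Lemma active_W_inv (r : rty) : active (RArr (AB BW) r) -> inactive r.
Proof.
move=> [Hi Hh]; have [Ha Hr] := initial_inv Hi; split => //.
inversion Hi as [r0 H1 H2 H3 E]; subst.
move: H1; rewrite /O1 /= has_count; lia.
Qed.

Lemma inactive_inv (a : aty) (r : rty) : inactive (RArr a r) -> inactive r.
Proof.
move=> [Hi Hh]; have [Ha Hr] := initial_inv Hi; split => //.
by move: Hh => /=; rewrite negb_or => /andP[].
Qed.

Lemma active_ord (r : rty) : active r -> 0 < ord_r r.
Proof. by case: r => [[_ //]|a r _] /=; rewrite leq_max. Qed.

Lemma active_not_inactive (r : rty) : active r -> inactive r -> False.
Proof. by move=> [_ H] [_ H']; rewrite H in H'. Qed.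

Lemma W_unique (s : seq aty) j j' : count (@isW T) s <= 1 ->
  j < size s -> j' < size s -> isW (nth (AR RO) s j) -> isW (nth (AR RO) s j') -> j = j'.
Proof.
elim: s j j' => //= a s IH [|j] [|j'] //= Hc lj lj' h h'.
- move: Hc; rewrite h /= => Hc.
  have : has (@isW T) s by apply/(has_nthP (AR RO)); exists j'.
  by rewrite has_count; lia.
- move: Hc; rewrite h' /= => Hc.
  have : has (@isW T) s by apply/(has_nthP (AR RO)); exists j.
  by rewrite has_count; lia.
- congr S; apply: IH => //. move: Hc; case: (isW a) => /=; lia.
Qed.

Lemma List_nth_nth (s : seq aty) j d : List.nth j s d = nth d s j.
Proof. by elim: s j => [|a s IH] [|j] //=. Qed.

End TypeFacts.

Section Sem.
Variables (Sg : bgsig) (A : bgstr Sg) (Sym : finType) (fty : Sym -> rty (Srt Sg)).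
Notation rty := (rty (Srt Sg)).
Notation aty := (aty (Srt Sg)).
Notation var := (@var Sg).
Notation val := (option {a : aty & Da A a}).

#[local] Unset Implicit Arguments.
Fixpoint appl (r : rty) : Dr A r -> seq val -> Prop :=
  match r return Dr A r -> seq val -> Prop with
  | RO => fun f L => L = [::] /\ f = true
  | RArr a r' => fun f L =>
      match L with
      | Some p :: L' => exists x : Da A a, existT _ a x = p /\ @appl r' (f x) L'
      | _ => False
      end
  end.
#[local] Set Implicit Arguments.

Lemma appl_cons (a : aty) (r : rty) (f : Dr A (RArr a r)) (x : Da A a) L :
  appl (RArr a r) f (Some (existT _ a x) :: L) <-> appl r (f x) L.
Proof.
split => /=; last by move=> H; exists x.
move=> [y [E H]]; have E' := inj_pairT2 _ _ _ _ _ E; by rewrite -E'.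
Qed.

Lemma appl_typed (r : rty) f L : appl r f L ->
  size L = size (args r) /\
  forall i, i < size (args r) -> exists x : Da A (nth (AR RO) (args r) i),
     nth None L i = Some (existT _ _ x).
Proof.
elim: r f L => [|a r IH] f L /=; first by move=> [-> _].
case: L => [|[p|] L] //= [x [<- H]].
have [-> H2] := IH _ _ H; split => // [[|i]] //= li.
  by exists x.
exact: H2.
Qed.

Fixpoint lookup (G : seq aty) : env A G -> nat -> val :=
  match G return env A G -> nat -> val with
  | [::] => fun _ _ => None
  | a :: G' => fun e n =>
      match n with
      | 0 => Some (existT _ a (e a (VZ G' a)))
      | n'.+1 => lookup (fun b v => e b (VS a v)) n'
      end
  end.

Lemma lookup_var G a (v : var G a) (e : env A G) :
  lookup e (vidx v) = Some (existT _ a (e a v)).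
Proof. by elim: v e => //= G0 a0 b v IH e; rewrite IH. Qed.

Lemma vidx_type G a b (v : var G a) (w : var G b) : vidx v = vidx w -> a = b.
Proof.
have H : forall G a (v : var G a), nth (AR RO) G (vidx v) = a by move=> ? ? u; elim: u.
by move=> E; rewrite -(H _ _ v) -(H _ _ w) E.
Qed.

Lemma vidx_lt G a (v : var G a) : vidx v < size G.
Proof. by elim: v. Qed.

Notation tm := (@tm Sg Sym fty).
Variable B0 : fgstr A fty.

Lemma av_types G r (t : tm G (AR r)) X l : appvars t X l ->
  [/\ size l + size (args r) = size (args (fty X)), drop (size l) (args (fty X)) = args r &
   forall i, i < size l -> exists a (v : var G a), vidx v = nth 0 l i /\ a = nth (AR RO) (args (fty X)) i].
Proof.
elim => [Y|a r0 t0 v Y l0 _ [IH1 IH2 IH3]].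
  by split => //; rewrite drop0.
rewrite size_rcons; split.
- by rewrite -IH1 /=; lia.
- have -> : (size l0).+1 = 1 + size l0 by []. by rewrite -drop_drop IH2 /= drop0.
- move=> i; rewrite ltnS leq_eqVlt => /orP[/eqP ->|li].
    exists a, v; rewrite nth_rcons ltnn eqxx; split => //.
    by rewrite -[size l0]addn0 -nth_drop IH2.
  by rewrite nth_rcons li; apply: IH3.
Qed.

Lemma av_sem G r (t : tm G (AR r)) X l : appvars t X l ->
  forall e rest, @appl r (eval B0 e t) rest <-> @appl (fty X) (B0 X) (map (lookup e) l ++ rest).
Proof.
elim => [Y|a r0 t0 v Y l0 _ IH] e rest //=.
rewrite map_rcons -cats1 -catA cat1s -IH lookup_var appl_cons //.
Qed.

Definition MonoX (X : Sym) := forall (pre post : seq val) (z z' : WC A), leW z z' ->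
  nth (AR RO) (args (fty X)) (size pre) = AB BW ->
  @appl (fty X) (B0 X) (pre ++ Some (existT (Da A) (AB BW) z) :: post) ->
  @appl (fty X) (B0 X) (pre ++ Some (existT (Da A) (AB BW) z') :: post).

Lemma limit_mono (Gamma : seq (clause fty)) X (C : clause fty) : O1 (fty X) -> models (@std _ A) B0 Gamma ->
  List.In C Gamma -> is_limit_clause X C -> MonoX X.
Proof.
move=> HO1 Hsat HC [j [l1 [l2 [z [z' [t1 [t2 [Hj [Hsz [Hcon [Hbody [Hhead
   [Hav1 [Hav2 [Hu1 [Hu2 [Hn1 [Hn2 [Hzz Hoth]]]]]]]]]]]]]]]]]]].
move=> pre post zv zv' Hle Hw Happ.
have [s1 d1 T1] := av_types Hav1.
have [s2 d2 T2] := av_types Hav2.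
move: s1 s2 => /= s1 s2; rewrite addn0 in s1; rewrite addn0 in s2.
have [sL1 TL1] := appl_typed Happ.
set k := size (args (fty X)) in s1 s2 Hsz sL1 TL1.
rewrite List_nth_nth in Hj.
have Hjk : j < k.
  by rewrite ltnNge; apply/negP => Hle'; move: Hj; rewrite nth_default.
have Hpk : size pre < k by rewrite -sL1 size_cat /=; lia.
have Ej : j = size pre.
  apply: (W_unique HO1) => //; by [rewrite Hj | rewrite Hw].
set L1 := pre ++ _ :: post in Happ sL1 TL1.
set L2 := pre ++ Some (existT (Da A) (AB BW) zv') :: post.
set g := fun n => if n == vidx z' then Some (existT (Da A) (AB BW) zv')
                  else nth None L1 (index n l1).
have notin : vidx z' \notin l1.
  apply/negP => /(nthP 0) [i li Ei].
  case: (eqVneq i j) => [Eij|Nij].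
    by apply: Hzz; rewrite -Hn1 -Ei Eij.
  have : nth 0 l2 i = nth 0 l2 j by rewrite Hn2 -Hoth; [rewrite Ei | apply/eqP].
  have li2 : i < size l2 by rewrite s2 -s1.
  have lj2 : j < size l2 by rewrite s2.
  by move/eqP; rewrite nth_uniq // (negbTE Nij).
have g1 : forall i, i < k -> g (nth 0 l1 i) = nth None L1 i.
  move=> i li; rewrite /g.
  have Hm : nth 0 l1 i \in l1 by rewrite mem_nth // s1.
  case: eqP => [E|_]; first by move: notin; rewrite -E Hm.
  by rewrite index_uniq // s1.
have g2 : forall i, i < k -> g (nth 0 l2 i) = nth None L2 i.
  move=> i li; case: (eqVneq i j) => [->|Nij].
    by rewrite Hn2 /g eqxx /L2 nth_cat Ej ltnn subnn.
  rewrite -Hoth; last by apply/eqP.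
  rewrite g1 // /L1 /L2 !nth_cat; case: ltnP => // hi.
  have : i - size pre != 0 by move: Nij; rewrite Ej; lia.
  by case: (i - size pre).
have Hcov : forall a (v : var (cctx C) a), exists x : Da A a, g (vidx v) = Some (existT _ a x).
  move=> a v.
  have uS : uniq (vidx z' :: l1) by rewrite /= notin.
  have sub : {subset vidx z' :: l1 <= iota 0 (size (cctx C))}.
    move=> n; rewrite inE mem_iota add0n => /orP[/eqP ->|]; first exact: vidx_lt.
    move/(nthP 0) => [i li <-]; have [a' [v' [E _]]] := T1 i li.
    by rewrite -E vidx_lt.
  have Hs : size (iota 0 (size (cctx C))) <= size (vidx z' :: l1) by rewrite size_iota Hsz /= s1.
  have [_ eqS] := uniq_min_size uS sub Hs.
  have : vidx v \in vidx z' :: l1 by rewrite eqS mem_iota add0n vidx_lt.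
  rewrite inE; case: (eqVneq (vidx v) (vidx z')) => [E _|N /= /(nthP 0) [i li Ei]].
    have Ea := vidx_type E; subst a.
    by exists zv'; rewrite /g E eqxx.
  have [a' [v' [E' Ea']]] := T1 i li.
  have Ea := vidx_type (etrans (esym Ei) (esym E')); subst a a'.
  rewrite s1 in li; have [x Hx] := TL1 i li.
  by exists x; rewrite -Ei g1 // Hx.
pose e : env A (cctx C) := fun a v => proj1_sig (constructive_indefinite_description _ (Hcov a v)).
have He : forall a (v : var (cctx C) a), lookup e (vidx v) = g (vidx v).
  move=> a v; rewrite lookup_var /e.
  by case: (constructive_indefinite_description _ _) => x /= ->.
have M1 : map (lookup e) l1 = L1.
  apply: (@eq_from_nth _ None); first by rewrite size_map s1 sL1.
  move=> i; rewrite size_map => li.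
  rewrite (nth_map 0) //; have [a' [v' [E' _]]] := T1 i li.
  by rewrite -E' He E' g1 // -s1.
have M2 : map (lookup e) l2 = L2.
  apply: (@eq_from_nth _ None); first by rewrite size_map s2 /L2 size_cat -sL1 size_cat.
  move=> i; rewrite size_map => li.
  rewrite (nth_map 0) //; have [a' [v' [E' _]]] := T2 i li.
  by rewrite -E' He E' g2 // -s2.
have Hez : forall (w : var (cctx C) (AB BW)) y,
    g (vidx w) = Some (existT (Da A) (AB BW) y) -> e _ w = y.
  move=> w y; rewrite -He lookup_var => -[E].
  exact: (inj_pairT2 _ _ _ _ _ E).
have := Hsat C HC e.
rewrite Hhead Hcon Hbody /= => H.
have Ht2 : eval B0 e t2 = true.
  apply: H.
  - by move=> a v; case: a v.
  - rewrite (Hez z zv); last by rewrite -Hn1 g1 // /L1 nth_cat Ej ltnn subnn.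
    rewrite (Hez z' zv') //; by rewrite /g eqxx.
  - move=> t [<-|[]].
    have : @appl RO (eval B0 e t1) [::] by apply/(av_sem Hav1); rewrite cats0 M1.
    by case.
have : @appl RO (eval B0 e t2) [::] by split.
by move/(av_sem Hav2); rewrite cats0 M2.
Qed.
End Sem.

Section Frames.
Variables (Sg : bgsig) (A : bgstr Sg) (Sym : finType) (fty : Sym -> rty (Srt Sg)).
Variable B0 : fgstr A fty.
Notation rty := (rty (Srt Sg)).
Notation aty := (aty (Srt Sg)).
Notation val := (option {a : aty & Da A a}).
Notation Bf := (fun _ : nat => B0).
Notation appl := (@appl Sg A).

Lemma RO_true n (b : bool) : @Fr _ _ _ fty Bf n RO b.
Proof. by elim: n => //= n IH _. Qed.

Lemma caseI n Xi (H : frame A) (B : fgstr A fty) (r : rty) f :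
  case_i n r -> H r f -> (EHp n Xi H B r).1 f.
Proof.
case: r f => [|a r] f /=; first by move=> _ Hf _.
move=> Hc Hf; split => //.
- move=> [Ha Ho]; case: Hc => [[_ Ho']|[Hi Ho']]; first by move: Ho Ho'; lia.
  by case: (active_not_inactive Ha Hi).
- move=> [_ Ho]; case: Hc => [[_ Ho']|[_ Ho']]; move: Ho Ho'; lia.
- by move=> Hn; exfalso; apply: Hn; left.
Qed.

Lemma caseI_inv n Xi (H : frame A) (B : fgstr A fty) (r : rty) f :
  case_i n r -> (EHp n Xi H B r).1 f -> H r f.
Proof.
case: r f => [|a r] f /=; first by move=> Hc Hf; exact: Hf.
by move=> Hc [H1 _ _ _]; exact: H1.
Qed.

Lemma inact n (r : rty) : inactive r -> ord_r r <= n -> forall f, @Fr _ _ _ fty Bf n r f.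
Proof.
elim: n r => [//|n IHn] r.
change (inactive r -> ord_r r <= n.+1 -> forall f, (EHp n.+1 (SigN fty n) (Fr Bf n) B0 r).1 f).
elim: r => [|a r' IHr] Hin Ho f /=.
  by move=> _; apply: RO_true.
split.
- move=> Hc; apply: IHn => //.
  by case: Hc => [[_ H']|[_ H']]; move: H'; lia.
- by move=> [Ha _]; case: (active_not_inactive Ha Hin).
- move=> _.
  have Hin' := inactive_inv Hin.
  have Ho' : ord_r r' <= n.+1 by apply: leq_trans Ho; rewrite /= leq_maxr.
  case: a f Hin Ho => [[s|]|r0] f Hin Ho.
  + by move=> x; apply: IHr.
  + by case: Hin => _ /=.
  + by move=> x _; apply: IHr.
- move=> Hn; exfalso; apply: Hn.
  case: (eqVneq (ord_r (RArr a r')) n.+1) => [E|N].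
    by right; right; split => //; case: Hin.
  by left; right; split => //; move: Ho N; lia.
Qed.

Lemma ordlem n Xi (H : frame A) (B : fgstr A fty) (r : rty) (f g : Dr A r) :
  (forall rest, appl r f rest -> appl r g rest) -> (EHp n Xi H B r).2 f g.
Proof.
elim: r f g => [|a r IH] f g Hfg /=.
  case: f Hfg => //= Hfg; have [_ ->] := Hfg [::] (conj erefl erefl); done.
move=> x _; apply: IH => rest.
by move/(appl_cons f x rest)/Hfg/(appl_cons g x rest).
Qed.

Definition Pref X (r : rty) (f : Dr A r) (L : seq val) :=
  (forall rest, appl r f rest <-> appl (fty X) (B0 X) (L ++ rest)) /\
  drop (size L) (args (fty X)) = args r.
Arguments Pref : clear implicits.

Lemma Pref_step X a (r : rty) f L (x : Da A a) : Pref X (RArr a r) f L ->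
  Pref X r (f x) (rcons L (Some (existT (Da A) a x))).
Proof.
move=> [H1 H2]; split.
  by move=> rest; rewrite cat_rcons -H1 appl_cons.
rewrite size_rcons.
have -> : (size L).+1 = 1 + size L by [].
by rewrite -drop_drop H2 /= drop0.
Qed.

Lemma iii n X : MonoX B0 X -> forall (r : rty), active r -> ord_r r = n.+1 ->
  forall f L, Pref X r f L -> (EHp n.+1 (SigN fty n) (Fr Bf n) B0 r).1 f.
Proof.
move=> HM; elim => [|a r' IH] Hac Ho f L HP.
  by move: (active_ord Hac); rewrite Ho.
split.
- move=> [[_ H']|[Hi _]]; first by move: Ho H'; lia.
  by case: (active_not_inactive Hac Hi).
- by move=> [_ H']; move: Ho H'; lia.
- move=> _; case: a f Hac Ho HP => [[s|]|r0] f Hac Ho HP.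
  + have [Ha' Ho' _] := active_inv Hac is_true_true.
    by move=> x; apply: (IH Ha' _ _ _ (Pref_step (a := AB (BS s)) x HP)); rewrite -Ho'.
  + split.
      have Hor : ord_r r' <= n.+1 by rewrite -Ho /= leq_maxr.
      move=> z; exact: (inact (active_W_inv Hac) Hor (f z)).
    move=> z z' Hzz; apply: ordlem => rest.
    have [H1 H2] := HP.
    move/(appl_cons f z rest)/H1 => Hz.
    apply/(appl_cons f z' rest)/H1.
    apply: HM Hz => //.
    by rewrite -[size L]addn0 -nth_drop H2.
  + have [Ha' Ho' _] := active_inv Hac is_true_true.
    by move=> x _; apply: (IH Ha' _ _ _ (Pref_step (a := AR r0) x HP)); rewrite -Ho'.
- move=> Hn; exfalso; apply: Hn; right; right; split => //; by case: Hac.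
Qed.

Lemma ii n X : SigN fty n X -> forall (r : rty), active r -> (ord_r r).+1 = n.+1 ->
  forall f, appchain (Fr Bf n) (B0 X) f -> (EHp n.+1 (SigN fty n) (Fr Bf n) B0 r).1 f.
Proof.
move=> HX; elim => [|a r' IH] Hac Ho f Hch.
  by move: (active_ord Hac) Ho => /=; lia.
split.
- move=> [[_ H']|[Hi _]]; first by move: Ho H'; lia.
  by case: (active_not_inactive Hac Hi).
- move=> _; case: a f Hac Ho Hch => [[s|]|r0] f Hac Ho Hch.
  + have [Ha' Ho' _] := active_inv Hac is_true_true.
    move=> x; apply: IH => //; first by rewrite -Ho'.
    exact: (@ACstep Sg A (Fr Bf n) _ (B0 X) (AB (BS s)) r' f x Hch I).
  + by right; exists X.
  + have [Ha' Ho' Hlt] := active_inv Hac is_true_true.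
    move=> x Hx; apply: IH => //; first by rewrite -Ho'.
    apply: (@ACstep Sg A (Fr Bf n) _ (B0 X) (AR r0) r' f x Hch) => /=.
    apply: (caseI_inv (Xi := SigN fty n) (B := B0) _ Hx).
    left; split.
      by have [Hi _] := Hac; have [/initialR_inv] := initial_inv Hi.
    by move: Hlt Ho Ho' => /=; lia.
- by move=> [_ H']; move: Ho H'; lia.
- move=> Hn; exfalso; apply: Hn; right; left; split => //.
Qed.


Lemma main_fr (Gamma : seq (clause fty)) : models (@std _ A) B0 Gamma ->
  limit_problem Gamma -> initial_sig fty ->
  forall n X, ord_r (fty X) <= n -> @Fr _ _ _ fty Bf n (fty X) (B0 X).
Proof.
move=> Hsat [_ Hlim] Hinit; elim => [//|n IHn] X Ho.
have Hi := Hinit X.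
change ((EHp n.+1 (SigN fty n) (Fr Bf n) B0 (fty X)).1 (B0 X)).
case Hh: (has (@isW _) (args (fty X))); last first.
  have Hin : inactive (fty X) by split => //; rewrite Hh.
  exact: (inact Hin Ho).
have Hac : active (fty X) by split.
have HM : MonoX B0 X.
  have [C [HC HL]] := Hlim X Hh.
  apply: (limit_mono _ Hsat HC HL); by inversion Hi.
move: Ho; rewrite leq_eqVlt => /orP[/eqP Eo|]. 
  apply: (iii HM Hac Eo (L := [::])); split => //; exact: drop0.
rewrite ltnS leq_eqVlt => /orP[/eqP Eo|Ho].
  apply: (ii (X := X)) => //; last exact: ACrefl.
  split; last by rewrite Eo.
  by rewrite -Eo; apply: active_ord.
  by rewrite Eo.
apply: (@caseI n.+1 (SigN fty n) (Fr Bf n) B0 (fty X) (B0 X)); first by left; split => //; lia.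
by apply: IHn; lia.
Qed.
End Frames.

Theorem mainTheorem6 (Sg : bgsig) (A : bgstr Sg) (Sym : finType)
    (fty : Sym -> rty (Srt Sg)) (Gamma : list (clause fty)) :
  total_order (@leW _ A) ->
  limit_problem Gamma ->
  initial_sig fty ->
  A_satisfiable A Gamma ->
  exists Bf : nat -> fgstr A fty,
    entwined Bf /\ models (Fr Bf (lmax fty).+1) (Bf (lmax fty).+1) Gamma.
Proof.
move=> _ Hlp Hinit [B0 Hsat].
exists (fun _ => B0); split.
  move=> i; split => // X [_ Ho].
  exact: (main_fr Hsat Hlp Hinit Ho).
move=> C HC e _ Hc Hb.
apply: (Hsat C HC e) => //.
by move=> a v; case: a v.
Qed.
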